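(* Let $\lambda$ be a nonzero real number. For every integer $n\ge0$, \[ \int_{0}^{\infty}e^{-2x}\,\mathrm{bel}_{n,\lambda}(-x)\,dx=\frac{\beta_{n+1,\lambda}-2^{n+1}\beta_{n+1,\frac{\lambda}{2}}}{n+1}. \]
   Context: For nonzero real $\lambda$, $e_\lambda(t)=(1+\lambda t)^{1/\lambda}$. The partially degenerate Bell polynomials $\mathrm{bel}_{n,\lambda}(x)$ are defined by $e^{x(e_{\lambda}(t)-1)}=\sum_{n=0}^{\infty}\mathrm{bel}_{n,\lambda}(x)\frac{t^{n}}{n!}$. The degenerate Bernoulli numbers $\beta_{n,\mu}$ (for nonzero real $\mu$) are defined by $\frac{t}{e_{\mu}(t)-1}=\sum_{n=0}^{\infty}\beta_{n,\mu}\frac{t^{n}}{n!}$, with $e_\mu(t)=(1+\mu t)^{1/\mu}$; here $\mu=\lambda$ or $\mu=\lambda/2$. *)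

(* Defs.v *)
From Stdlib Require Import Reals.
From Coquelicot Require Import Coquelicot.
Open Scope R_scope.

(* e_lambda(t) = (1 + lambda t)^(1/lambda)  (real power, meaningful for 1 + lambda t > 0,
   in particular for t near 0). *)
Definition e_lam (lam t : R) : R := Rpower (1 + lam * t) (/ lam).

Definition is_degenerate_bell (lam : R) (bel : nat -> R -> R) : Prop :=
  forall x : R, exists r : R, 0 < r /\
    forall t : R, Rabs t < r ->
      is_pseries (fun n => bel n x / INR (Factorial.fact n)) t (exp (x * (e_lam lam t - 1))).

(* beta : nat -> R is the sequence of degenerate Bernoulli numbers beta_{n,mu}:
   sum_n beta n t^n / n! = t / (e_mu(t) - 1) for t near 0 (t <> 0; the value at
   t = 0 is the removable-singularity value). *)
Definition is_degenerate_bernoulli (mu : R) (beta : nat -> R) : Prop :=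
  exists r : R, 0 < r /\
    forall t : R, 0 < Rabs t < r ->
      is_pseries (fun n => beta n / INR (Factorial.fact n)) t (t / (e_lam mu t - 1)).

(* Main.v *)
Require Import Defs.
From Stdlib Require Import Reals Lra Lia Arith.
From Coquelicot Require Import Coquelicot.
Open Scope R_scope.

Lemma sum_ge_term (f : nat -> R) (N n : nat) :
  (forall k, 0 <= f k) -> (n <= N)%nat -> f n <= sum_f_R0 f N.
Proof.
  intros Hf. induction N as [|N IH]; intros Hn.
  - inversion Hn. simpl. lra.
  - simpl. destruct (Nat.eq_dec n (S N)) as [->|Hne].
    + assert (0 <= sum_f_R0 f N) by (apply cond_pos_sum; auto). lra.
    + assert (f n <= sum_f_R0 f N) by (apply IH; lia). specialize (Hf (S N)). lra.
Qed.

Lemma bounded_of_lim0 (u : nat -> R) : is_lim_seq u 0 -> exists M, forall n, Rabs (u n) <= M.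
Proof.
  intros H.
  destruct (proj2 (is_lim_seq_spec u 0) H (mkposreal 1 Rlt_0_1)) as [N HN].
  exists (1 + sum_f_R0 (fun k => Rabs (u k)) N).
  intros n. assert (0 <= sum_f_R0 (fun k => Rabs (u k)) N) by (apply cond_pos_sum; intros; apply Rabs_pos).
  destruct (le_lt_dec N n) as [Hl|Hl].
  - specialize (HN n Hl). simpl in HN. rewrite Rminus_0_r in HN. lra.
  - assert (Rabs (u n) <= sum_f_R0 (fun k => Rabs (u k)) N).
    { apply (sum_ge_term (fun k => Rabs (u k))). intros; apply Rabs_pos. lia. }
    lra.
Qed.

Lemma radius_ge (a : nat -> R) (r : R) :
  (forall t, 0 < Rabs t < r -> ex_pseries a t) ->
  forall t, Rabs t < r -> Rbar_lt (Rabs t) (CV_radius a).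
Proof.
  intros H t Ht.
  set (s := (Rabs t + r) / 2).
  assert (Hs0 : 0 < s) by (unfold s; pose proof (Rabs_pos t); lra).
  assert (Hs : Rabs s = s) by (apply Rabs_pos_eq; lra).
  assert (Hex : ex_pseries a s) by (apply H; rewrite Hs; unfold s; pose proof (Rabs_pos t); lra).
  apply ex_pseries_R in Hex. apply ex_series_lim_0 in Hex.
  destruct (bounded_of_lim0 _ Hex) as [M HM].
  apply Rbar_lt_le_trans with (Finite s).
  - simpl. unfold s; lra.
  - destruct (CV_radius_bounded a) as [Hub _]. apply Hub. exists M. exact HM.
Qed.

Lemma pseries_ext_ball (a c : nat -> R) (r : R) : 0 < r ->
  Rbar_lt 0 (CV_radius a) -> Rbar_lt 0 (CV_radius c) ->
  (forall t, Rabs t < r -> PSeries a t = PSeries c t) -> forall n, a n = c n.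
Proof.
  intros Hr Ha Hc H n. apply PSeries_ext_recip; auto.
  exists (mkposreal r Hr). intros y Hy. apply H.
  change (Rabs (y - 0) < r) in Hy. rewrite Rminus_0_r in Hy. exact Hy.
Qed.

Lemma pseries_uniq (a c : nat -> R) (f : R -> R) (r : R) : 0 < r ->
  (forall t, Rabs t < r -> is_pseries a t (f t)) ->
  (forall t, Rabs t < r -> is_pseries c t (f t)) -> forall n, a n = c n.
Proof.
  intros Hr Ha Hc.
  assert (R0 : Rabs 0 < r) by (rewrite Rabs_R0; lra).
  apply (pseries_ext_ball a c r Hr).
  - rewrite <- Rabs_R0. apply (radius_ge a r); auto.
    intros t Ht. eexists. apply Ha. lra.
  - rewrite <- Rabs_R0. apply (radius_ge c r); auto.
    intros t Ht. eexists. apply Hc. lra.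
  - intros t Ht. rewrite (is_pseries_unique _ _ _ (Ha t Ht)).
    rewrite (is_pseries_unique _ _ _ (Hc t Ht)). reflexivity.
Qed.

Lemma pseries_uniq0 (a c : nat -> R) (f : R -> R) (r : R) : 0 < r ->
  (forall t, 0 < Rabs t < r -> is_pseries a t (f t)) ->
  (forall t, 0 < Rabs t < r -> is_pseries c t (f t)) -> forall n, a n = c n.
Proof.
  intros Hr Ha Hc.
  assert (Ra : forall t, Rabs t < r -> Rbar_lt (Rabs t) (CV_radius a)).
  { apply radius_ge. intros t Ht. eexists. apply Ha. lra. }
  assert (Rc : forall t, Rabs t < r -> Rbar_lt (Rabs t) (CV_radius c)).
  { apply radius_ge. intros t Ht. eexists. apply Hc. lra. }
  assert (R0 : Rabs 0 < r) by (rewrite Rabs_R0; lra).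
  apply (pseries_ext_ball a c r Hr).
  - rewrite <- Rabs_R0. auto.
  - rewrite <- Rabs_R0. auto.
  - set (g := fun t => PSeries a t - PSeries c t).
    assert (Hg : forall t, 0 < Rabs t < r -> g t = 0).
    { intros t Ht. unfold g. rewrite (is_pseries_unique _ _ _ (Ha t Ht)).
      rewrite (is_pseries_unique _ _ _ (Hc t Ht)). ring. }
    assert (Hg0 : g 0 = 0).
    { assert (Hcont : continuity_pt g 0).
      { apply continuity_pt_minus; apply PSeries_continuity; auto. }
      destruct (Req_dec (g 0) 0) as [E|E]; auto. exfalso.
      destruct (Hcont (Rabs (g 0)) (Rabs_pos_lt _ E)) as [alp [Halp H]].
      set (x := Rmin alp r / 2).
      assert (Hx0 : 0 < x) by (unfold x; pose proof (Rmin_glb_lt alp r 0 Halp Hr); lra).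
      assert (Hxa : x < alp) by (unfold x; pose proof (Rmin_l alp r); lra).
      assert (Hxr : x < r) by (unfold x; pose proof (Rmin_r alp r); lra).
      assert (Hax : Rabs x = x) by (apply Rabs_pos_eq; lra).
      specialize (H x). simpl in H. unfold R_dist in H.
      rewrite Hg in H by (rewrite Hax; lra).
      rewrite Rminus_0_r, Hax, Rminus_0_l, Rabs_Ropp in H.
      assert (Rabs (g 0) < Rabs (g 0)) by (apply H; split; [split; [exact I| lra] | lra]).
      lra. }
    intros t Ht. destruct (Req_dec t 0) as [->|Ht0].
    + unfold g in Hg0. lra.
    + assert (g t = 0) by (apply Hg; split; [apply Rabs_pos_lt; auto | auto]).
      unfold g in H. lra.
Qed.

Lemma e_pos lam t : 0 < e_lam lam t.
Proof. unfold e_lam, Rpower. apply exp_pos. Qed.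

Lemma e_0 lam : e_lam lam 0 = 1.
Proof. unfold e_lam, Rpower. rewrite Rmult_0_r, Rplus_0_r, ln_1, Rmult_0_r. apply exp_0. Qed.

Lemma e_deriv lam t : lam <> 0 -> 0 < 1 + lam * t ->
  is_derive (e_lam lam) t (e_lam lam t / (1 + lam * t)).
Proof.
  intros Hl Hp. unfold e_lam, Rpower.
  auto_derive. exact Hp. field. split; lra.
Qed.

Lemma e_ne1 lam t : lam <> 0 -> 0 < 1 + lam * t -> t <> 0 -> e_lam lam t <> 1.
Proof.
  intros Hl Hp Ht E. unfold e_lam, Rpower in E.
  assert (E' : exp (/ lam * ln (1 + lam * t)) = exp 0) by (rewrite exp_0; exact E).
  apply exp_inv in E'. clear E. rename E' into E.
  assert (ln (1 + lam * t) = 0).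
  { apply Rmult_eq_reg_l with (/ lam). rewrite E; ring. apply Rinv_neq_0_compat; auto. }
  rewrite <- ln_1 in H. apply ln_inv in H; [|lra|lra].
  assert (lam * t = 0) by lra. apply Rmult_integral in H0. tauto.
Qed.

Lemma e_sq lam t : lam <> 0 -> e_lam (lam / 2) (2 * t) = e_lam lam t ^ 2.
Proof.
  intros Hl. unfold e_lam, Rpower. simpl. rewrite Rmult_1_r, <- exp_plus.
  f_equal. replace (1 + lam / 2 * (2 * t)) with (1 + lam * t) by field.
  field. auto.
Qed.

Lemma sum_S_l (f : nat -> R) n : sum_f_R0 f (S n) = f 0%nat + sum_f_R0 (fun i => f (S i)) n.
Proof. rewrite decomp_sum by lia. reflexivity. Qed.

Lemma sum_zero (f : nat -> R) n : (forall k, (k <= n)%nat -> f k = 0) -> sum_f_R0 f n = 0.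
Proof.
  intros H. induction n as [|n IH]; simpl.
  - apply H; lia.
  - rewrite IH by (intros; apply H; lia). rewrite H by lia. ring.
Qed.

Lemma sum_extend (f : nat -> R) m n : (m <= n)%nat ->
  (forall k, (m < k <= n)%nat -> f k = 0) -> sum_f_R0 f n = sum_f_R0 f m.
Proof.
  intros Hmn H. induction n as [|n IH].
  - assert (m = 0)%nat by lia. subst. reflexivity.
  - destruct (Nat.eq_dec m (S n)) as [->|Hne]; [reflexivity|].
    simpl. rewrite IH by (try lia; intros; apply H; lia). rewrite (H (S n)) by lia. ring.
Qed.

Lemma sum_swap (f : nat -> nat -> R) m n :
  sum_f_R0 (fun i => sum_f_R0 (fun j => f i j) n) m =
  sum_f_R0 (fun j => sum_f_R0 (fun i => f i j) m) n.
Proof.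
  pose proof (sum_n_switch (G := R_AbelianMonoid) f m n) as H.
  rewrite !sum_n_Reals in H.
  rewrite (sum_eq _ (fun i => sum_n (f i) n)) by (intros; rewrite sum_n_Reals; reflexivity).
  rewrite H. apply sum_eq. intros. rewrite sum_n_Reals. reflexivity.
Qed.

Lemma sum_mult_l (f : nat -> R) c n : sum_f_R0 (fun i => c * f i) n = c * sum_f_R0 f n.
Proof. rewrite scal_sum. apply sum_eq. intros; ring. Qed.

Definition delta0 (n : nat) : R := match n with 0%nat => 1 | _ => 0 end.
Definition delta1 (n : nat) : R := match n with 1%nat => 1 | _ => 0 end.
Definition mkalpha (g : nat -> R) (n : nat) : R :=
  match n with 0%nat => 0 | S m => g m / INR (S m) end.
Fixpoint upow (al : nat -> R) (k : nat) : nat -> R :=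
  match k with 0%nat => delta0 | S k => PS_mult al (upow al k) end.
Definition shift (x : nat -> R) (n : nat) : R := match n with 0%nat => 0 | S m => x m end.

Lemma sum_delta0 (g : nat -> R) n : sum_f_R0 (fun m => delta0 m * g m) n = g 0%nat.
Proof. induction n as [|n IH]; simpl; [ring| rewrite IH; ring]. Qed.

Lemma upow_zero al k n : al 0%nat = 0 -> (n < k)%nat -> upow al k n = 0.
Proof.
  intros H0. revert n. induction k as [|k IH]; intros n Hn; [lia|].
  simpl. unfold PS_mult. apply sum_zero. intros m Hm.
  destruct m as [|m].
  - rewrite H0. ring.
  - rewrite IH by lia. ring.
Qed.

Lemma PS_mult_rev (a x : nat -> R) n : PS_mult a x n = sum_f_R0 (fun k => a (n - k)%nat * x k) n.
Proof.
  unfold PS_mult. rewrite <- (sum_f_R0_skip (fun k => a (n - k)%nat * x k)).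
  apply sum_eq. intros i Hi. f_equal; f_equal; lia.
Qed.

Lemma PS_mult_shift0 (a x : nat -> R) : PS_mult a (shift x) 0%nat = 0.
Proof. unfold PS_mult. simpl. ring. Qed.

Lemma PS_mult_shiftS (a x : nat -> R) n : PS_mult a (shift x) (S n) = PS_mult a x n.
Proof.
  rewrite !PS_mult_rev. rewrite sum_S_l. simpl shift. rewrite Rmult_0_r, Rplus_0_l.
  apply sum_eq. intros i Hi. reflexivity.
Qed.

Lemma PS_mult_cancel (a x y : nat -> R) : a 0%nat <> 0 ->
  (forall n, PS_mult a x n = PS_mult a y n) -> forall n, x n = y n.
Proof.
  intros Ha H n. induction n as [n IH] using (well_founded_induction lt_wf).
  specialize (H n). rewrite !PS_mult_rev in H.
  destruct n as [|n].
  - simpl in H. apply Rmult_eq_reg_l with (a 0%nat); auto.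
  - rewrite !tech5 in H.
    rewrite (sum_eq (fun k => a (S n - k)%nat * x k) (fun k => a (S n - k)%nat * y k)) in H
      by (intros i Hi; rewrite IH by lia; reflexivity).
    rewrite Nat.sub_diag in H. apply Rmult_eq_reg_l with (a 0%nat); auto. lra.
Qed.

Definition Pol (g : nat -> R) (x : R) (n : nat) : R :=
  sum_f_R0 (fun k => x ^ k / INR (fact k) * upow (mkalpha g) k n) n.

Lemma INR_fact_S k : INR (fact (S k)) = INR (S k) * INR (fact k).
Proof. rewrite <- mult_INR. reflexivity. Qed.

Lemma Pol_rec (g : nat -> R) (x : R) (n : nat)
  (Hder : forall k n, INR (S n) * upow (mkalpha g) (S k) (S n) =
                      INR (S k) * PS_mult g (upow (mkalpha g) k) n) :
  INR (S n) * Pol g x (S n) = x * PS_mult g (Pol g x) n.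
Proof.
  set (u := upow (mkalpha g)).
  assert (Hu : forall k m, (m < k)%nat -> u k m = 0).
  { intros k m Hk. apply upow_zero; [reflexivity|exact Hk]. }
  transitivity (x * sum_f_R0 (fun k => x ^ k / INR (fact k) * PS_mult g (u k) n) n).
  - unfold Pol. fold u. rewrite sum_S_l. simpl (u 0%nat (S n)).
    rewrite Rmult_0_r, Rplus_0_l, <- sum_mult_l, <- sum_mult_l.
    apply sum_eq. intros k Hk.
    rewrite INR_fact_S.
    assert (Hd := Hder k n). fold u in Hd.
    assert (INR (S k) <> 0) by (apply not_0_INR; lia).
    assert (INR (fact k) <> 0) by apply INR_fact_neq_0.
    transitivity (x ^ S k / (INR (S k) * INR (fact k)) * (INR (S n) * u (S k) (S n))).
    { ring. }
    rewrite Hd. simpl pow. field. split; auto.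
  - f_equal. unfold PS_mult, Pol. fold u.
    transitivity (sum_f_R0 (fun j => sum_f_R0 (fun k => g j * (x ^ k / INR (fact k) * u k (n - j)%nat)) n) n).
    + rewrite sum_swap. apply sum_eq. intros k Hk. rewrite <- sum_mult_l.
      apply sum_eq. intros j Hj. ring.
    + apply sum_eq. intros j Hj. rewrite sum_mult_l. f_equal.
      apply sum_extend; [lia|]. intros k Hk. rewrite Hu by lia. ring.
Qed.

Definition cseq (g : nat -> R) (n : nat) : R :=
  sum_f_R0 (fun k => (-1) ^ k * upow (mkalpha g) k n / 2 ^ (S k)) (S n).

Definition alpha2 (g : nat -> R) (n : nat) : R := mkalpha g n + 2 * delta0 n.

Lemma cseq_rec (g : nat -> R) n : PS_mult (alpha2 g) (cseq g) n = delta0 n.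
Proof.
  set (al := mkalpha g). set (u := upow al).
  assert (Hu : forall k m, (m < k)%nat -> u k m = 0).
  { intros k m Hk. apply upow_zero; [reflexivity|exact Hk]. }
  unfold PS_mult, alpha2. fold al.
  rewrite (sum_eq _ (fun m => al m * cseq g (n - m)%nat + delta0 m * (2 * cseq g (n - m)%nat)))
    by (intros; ring).
  rewrite plus_sum, sum_delta0, Nat.sub_0_r.
  assert (H1 : sum_f_R0 (fun m => al m * cseq g (n - m)%nat) n =
               sum_f_R0 (fun k => (-1) ^ k / 2 ^ (S k) * u (S k) n) n).
  { transitivity (sum_f_R0 (fun m => sum_f_R0 (fun k => al m * ((-1) ^ k * u k (n - m)%nat / 2 ^ (S k))) (S n)) n).
    - apply sum_eq. intros m Hm. unfold cseq. fold al. fold u. rewrite <- sum_mult_l.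
      symmetry. apply sum_extend; [lia|]. intros k Hk. rewrite Hu by lia. field.
      apply pow_nonzero. lra.
    - rewrite sum_swap. rewrite tech5.
      rewrite (sum_zero (fun i => al i * ((-1) ^ S n * u (S n) (n - i)%nat / 2 ^ S (S n))))
        by (intros; rewrite Hu by lia; field; apply pow_nonzero; lra).
      rewrite Rplus_0_r. apply sum_eq. intros k Hk.
      simpl (u (S k)). unfold PS_mult.
      transitivity ((-1) ^ k / 2 ^ S k * sum_f_R0 (fun i => al i * u k (n - i)%nat) n).
      { rewrite <- sum_mult_l. apply sum_eq. intros m Hm. field. apply pow_nonzero; lra. }
      reflexivity. }
  rewrite H1. unfold cseq. fold al. fold u. rewrite sum_S_l.
  rewrite Rmult_plus_distr_l, <- sum_mult_l.
  transitivity (2 * ((-1) ^ 0 * u 0%nat n / 2 ^ 1) +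
     sum_f_R0 (fun k => (-1) ^ k / 2 ^ S k * u (S k) n + 2 * ((-1) ^ S k * u (S k) n / 2 ^ S (S k))) n).
  { rewrite plus_sum. ring. }
  rewrite sum_zero; [| intros; simpl; field; apply pow_nonzero; lra]. simpl. unfold u. simpl. field.
Qed.

Lemma exp_ge_pow (y : R) (m : nat) : 0 <= y -> y ^ m / INR (fact m) <= exp y.
Proof.
  intros Hy. eapply Rle_trans; [|apply (exp_ge_taylor y m Hy)].
  apply (sum_ge_term (fun k => y ^ k / INR (fact k))); [|lia].
  intros k. apply Rdiv_le_0_compat. apply pow_le; auto. apply INR_fact_lt_0.
Qed.

Lemma lim_mon_exp (m : nat) : is_lim (fun x => x ^ m * exp (-2 * x)) p_infty 0.
Proof.
  apply is_lim_spec. intros eps. simpl.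
  set (C := INR (fact (S m)) / 2 ^ (S m)).
  assert (HC : 0 < C) by (unfold C; apply Rdiv_lt_0_compat; [apply INR_fact_lt_0| apply pow_lt; lra]).
  exists (Rmax 1 (C / eps)). intros x Hx.
  assert (Hx1 : 1 < x) by (eapply Rle_lt_trans; [apply Rmax_l|exact Hx]).
  assert (Hx2 : C / eps < x) by (eapply Rle_lt_trans; [apply Rmax_r|exact Hx]).
  pose proof (exp_ge_pow (2 * x) (S m) ltac:(lra)) as He.
  assert (Hpos : 0 < x ^ m * exp (-2 * x)) by (apply Rmult_lt_0_compat; [apply pow_lt; lra|apply exp_pos]).
  rewrite Rminus_0_r, Rabs_pos_eq by lra.
  assert (Hb : x ^ m * exp (-2 * x) <= C / x).
  { assert (E : exp (-2 * x) = / exp (2 * x)) by (rewrite <- exp_Ropp; f_equal; ring).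
    rewrite E. unfold C.
    assert (0 < exp (2 * x)) by apply exp_pos.
    assert (0 < INR (fact (S m))) by apply INR_fact_lt_0.
    rewrite Rpow_mult_distr in He.
    apply Rmult_le_reg_r with (exp (2 * x) * x * 2 ^ S m / INR (fact (S m))).
    { apply Rdiv_lt_0_compat; auto. apply Rmult_lt_0_compat; [nra|apply pow_lt; lra]. }
    replace (x ^ m * / exp (2 * x) * (exp (2 * x) * x * 2 ^ S m / INR (fact (S m))))
      with (2 ^ S m * x ^ S m / INR (fact (S m))) by (change (x ^ S m) with (x * x ^ m); field; split; lra).
    replace (INR (fact (S m)) / 2 ^ S m / x * (exp (2 * x) * x * 2 ^ S m / INR (fact (S m))))
      with (exp (2 * x)).
    exact He. field. repeat split; try lra. apply pow_nonzero; lra. }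
  eapply Rle_lt_trans; [exact Hb|].
  apply Rmult_lt_reg_r with (x / eps). { apply Rdiv_lt_0_compat; [lra| apply cond_pos]. }
  pose proof (cond_pos eps).
  replace (C / x * (x / eps)) with (C / eps) by (field; lra).
  replace (eps * (x / eps)) with x by (field; lra). exact Hx2.
Qed.

Fixpoint Fk (k : nat) (x : R) : R :=
  match k with
  | 0%nat => - exp (-2 * x) / 2
  | S j => - x ^ (S j) * exp (-2 * x) / 2 + INR (S j) / 2 * Fk j x
  end.

Lemma Fk_deriv k x : is_derive (Fk k) x (x ^ k * exp (-2 * x)).
Proof.
  induction k as [|k IH].
  - simpl. auto_derive; auto. field.
  - assert (H1 : is_derive (fun x => - x ^ (S k) * exp (-2 * x) / 2) x
        (- INR (S k) * x ^ k * exp (-2 * x) / 2 + x ^ S k * exp (-2 * x))).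
    { auto_derive; auto.
      change (match k with 0%nat => 1 | S _ => INR k + 1 end) with (INR (S k)).
      change (x ^ S k) with (x * x ^ k). field. }
    pose proof (is_derive_scal (Fk k) x (INR (S k) / 2) _ IH) as H2.
    pose proof (is_derive_plus _ _ x _ _ H1 H2) as H3.
    replace (x ^ S k * exp (-2 * x)) with (plus (- INR (S k) * x ^ k * exp (-2 * x) / 2 + x ^ S k * exp (-2 * x)) (INR (S k) / 2 * (x ^ k * exp (-2 * x)))).
    2: unfold plus; simpl; field.
    apply is_derive_ext with (2 := H3). intros; reflexivity.
Qed.

Lemma Fk_0 k : Fk k 0 = - INR (fact k) / 2 ^ (S k).
Proof.
  induction k as [|k IH].
  - simpl. rewrite Rmult_0_r, exp_0. field.
  - cbn [Fk]. rewrite IH.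
    change (fact (S k)) with (S k * fact k)%nat. rewrite mult_INR.
    rewrite pow_i by lia. change (2 ^ S (S k)) with (2 * 2 ^ S k). field.
    apply pow_nonzero; lra.
Qed.

Lemma Fk_lim k : is_lim (Fk k) p_infty 0.
Proof.
  induction k as [|k IH].
  - apply is_lim_ext with (fun x => (-1/2) * (x ^ 0 * exp (-2 * x))).
    { intros y. simpl. field. }
    pose proof (is_lim_scal_l _ (-1/2) _ _ (lim_mon_exp 0)) as H. simpl in H.
    rewrite Rmult_0_r in H. exact H.
  - apply is_lim_ext with (fun x => (-1/2) * (x ^ S k * exp (-2 * x)) + INR (S k) / 2 * Fk k x).
    { intros y. cbn [Fk]. field. }
    pose proof (is_lim_scal_l _ (-1/2) _ _ (lim_mon_exp (S k))) as H1. simpl in H1.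
    pose proof (is_lim_scal_l _ (INR (S k) / 2) _ _ IH) as H2. simpl in H2.
    pose proof (is_lim_plus' _ _ _ _ _ H1 H2) as H3.
    rewrite !Rmult_0_r, Rplus_0_r in H3. exact H3.
Qed.

Lemma mono_int k : is_RInt_gen (fun x => x ^ k * exp (-2 * x)) (at_point 0) (Rbar_locally p_infty)
  (INR (fact k) / 2 ^ (S k)).
Proof.
  assert (HD : forall x, Derive (Fk k) x = x ^ k * exp (-2 * x)).
  { intros x. apply is_derive_unique. apply Fk_deriv. }
  apply is_RInt_gen_ext with (Derive (Fk k)).
  { apply filter_forall. intros ab x _. apply HD. }
  replace (INR (fact k) / 2 ^ S k) with (0 - Fk k 0) by (rewrite Fk_0; field; apply pow_nonzero; lra).
  apply is_RInt_gen_Derive.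
  - apply filter_forall. intros ab x _. eexists. apply Fk_deriv.
  - apply filter_forall. intros ab x _. apply continuous_ext with (fun x => x ^ k * exp (-2 * x)).
    { intros; symmetry; apply HD. }
    apply (ex_derive_continuous (K := R_AbsRing) (V := R_NormedModule)). auto_derive. auto.
  - intros P HP. apply (locally_singleton _ _ HP).
  - apply (Fk_lim k).
Qed.

Lemma poly_int (w : nat -> R) n :
  is_RInt_gen (fun x => sum_f_R0 (fun k => w k * (x ^ k * exp (-2 * x))) n)
    (at_point 0) (Rbar_locally p_infty)
    (sum_f_R0 (fun k => w k * (INR (fact k) / 2 ^ (S k))) n).
Proof.
  induction n as [|n IH].
  - exact (is_RInt_gen_scal _ (w 0%nat) _ (mono_int 0)).
  - exact (is_RInt_gen_plus _ _ _ _ IH (is_RInt_gen_scal _ (w (S n)) _ (mono_int (S n)))).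
Qed.

Lemma is_series_zero : is_series (fun _ : nat => 0) 0.
Proof.
  unfold is_series. apply filterlim_ext with (fun _ => 0).
  - intros n. rewrite sum_n_Reals. induction n; simpl; [reflexivity| rewrite <- IHn; ring].
  - apply filterlim_const.
Qed.

Lemma pseries_delta0 t : is_pseries delta0 t 1.
Proof.
  unfold is_pseries. apply is_series_decr_1.
  match goal with |- is_series _ ?l => replace l with 0 end.
  - apply is_series_ext with (fun _ => 0); [|apply is_series_zero].
    intros n. simpl. unfold scal; simpl; unfold mult; simpl. ring.
  - simpl. unfold scal, plus, opp; simpl. unfold mult, plus, opp; simpl. unfold one; simpl. ring.
Qed.

Lemma pseries_delta1 t : is_pseries delta1 t t.
Proof.
  pose proof (is_pseries_incr_1 _ t _ (pseries_delta0 t)) as H.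
  match type of H with is_pseries _ _ ?l => replace l with t in H by (symmetry; apply Rmult_1_r) end.
  eapply is_pseries_ext; [|exact H]. intros [|[|n]]; reflexivity.
Qed.

Lemma locally_abs t r : Rabs t < r -> locally t (fun s => Rabs s < r).
Proof.
  intros H. assert (Hp : 0 < r - Rabs t) by lra.
  exists (mkposreal _ Hp). intros s Hs. change (Rabs (s - t) < r - Rabs t) in Hs.
  pose proof (Rabs_triang_inv s t). lra.
Qed.

Lemma pseries_at (c : nat -> R) t : Rbar_lt (Rabs t) (CV_radius c) -> is_pseries c t (PSeries c t).
Proof. intros H. apply PSeries_correct. apply CV_radius_inside. exact H. Qed.

Lemma pseries_deriv_eq (c : nat -> R) (f : R -> R) (r t df : R) :
  (forall s, Rabs s < r -> PSeries c s = f s) -> Rabs t < r ->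
  Rbar_lt (Rabs t) (CV_radius c) -> is_derive f t df ->
  PSeries (PS_derive c) t = df.
Proof.
  intros Hf Ht Hc Hd.
  pose proof (is_derive_PSeries c t Hc) as H1.
  assert (H2 : is_derive f t (PSeries (PS_derive c) t)).
  { apply is_derive_ext_loc with (PSeries c); [|exact H1].
    eapply filter_imp; [|apply (locally_abs t r Ht)]. intros s Hs. apply Hf. exact Hs. }
  apply is_derive_unique in H2. apply is_derive_unique in Hd. congruence.
Qed.

Lemma pseries_uniq' (a c : nat -> R) (f g : R -> R) (r : R) : 0 < r ->
  (forall t, Rabs t < r -> is_pseries a t (f t)) ->
  (forall t, Rabs t < r -> is_pseries c t (g t)) ->
  (forall t, Rabs t < r -> f t = g t) -> forall n, a n = c n.
Proof.
  intros Hr Ha Hc Hfg. apply (pseries_uniq a c f r Hr Ha).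
  intros t Ht. rewrite Hfg by exact Ht. apply Hc. exact Ht.
Qed.

Lemma radius_of (a : nat -> R) (f : R -> R) (r : R) :
  (forall t, Rabs t < r -> is_pseries a t (f t)) ->
  forall t, Rabs t < r -> Rbar_lt (Rabs t) (CV_radius a).
Proof. intros H. apply radius_ge. intros t Ht. eexists. apply H. lra. Qed.

Lemma radius_of0 (a : nat -> R) (f : R -> R) (r : R) :
  (forall t, 0 < Rabs t < r -> is_pseries a t (f t)) ->
  forall t, Rabs t < r -> Rbar_lt (Rabs t) (CV_radius a).
Proof. intros H. apply radius_ge. intros t Ht. eexists. apply H. lra. Qed.

Lemma cont_of_derive f x l : is_derive f x l -> continuity_pt f x.
Proof.
  intros H. apply continuity_pt_filterlim.
  apply (ex_derive_continuous (K := R_AbsRing) (V := R_NormedModule)). eexists. exact H.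
Qed.

Lemma one_plus_pos lam t : lam <> 0 -> Rabs t < / (2 * Rabs lam) -> 0 < 1 + lam * t.
Proof.
  intros Hl Ht. assert (Hp : 0 < Rabs lam) by (apply Rabs_pos_lt; auto).
  assert (Rabs (lam * t) < / 2).
  { rewrite Rabs_mult. apply Rmult_lt_reg_l with (/ Rabs lam). apply Rinv_0_lt_compat; auto.
    replace (/ Rabs lam * (Rabs lam * Rabs t)) with (Rabs t) by (field; lra).
    replace (/ Rabs lam * / 2) with (/ (2 * Rabs lam)) by (field; lra). exact Ht. }
  apply Rabs_def2 in H. lra.
Qed.

Lemma G_deriv lam x t : lam <> 0 -> 0 < 1 + lam * t ->
  is_derive (fun s => exp (x * (e_lam lam s - 1))) t
    (x * (e_lam lam t / (1 + lam * t)) * exp (x * (e_lam lam t - 1))).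
Proof.
  intros Hl Hp. unfold e_lam, Rpower. auto_derive. exact Hp. unfold Rminus. field. split; lra.
Qed.

Lemma A_deriv lam t : lam <> 0 -> 0 < 1 + lam * t ->
  is_derive (fun s => e_lam lam s - 1) t (e_lam lam t / (1 + lam * t)).
Proof.
  intros Hl Hp. unfold e_lam, Rpower. auto_derive. exact Hp. field. split; lra.
Qed.

Definition bx (bel : nat -> R -> R) (x : R) (n : nat) : R := bel n x / INR (fact n).

Lemma step_gamma lam (Hlam : lam <> 0) bel (Hbel : is_degenerate_bell lam bel) :
  exists (g : nat -> R) (rho : R), 0 < rho /\ rho <= / (2 * Rabs lam) /\
    (forall t, Rabs t < rho -> is_pseries g t (e_lam lam t / (1 + lam * t))).
Proof.
  destruct (Hbel 1) as [r1 [Hr1 H1]].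
  destruct (Hbel (-1)) as [rm [Hrm Hm]].
  set (dl := / (2 * Rabs lam)).
  assert (Hdl : 0 < dl) by (unfold dl; apply Rinv_0_lt_compat; pose proof (Rabs_pos_lt _ Hlam); lra).
  set (rho := Rmin (Rmin r1 rm) dl).
  assert (Hrho : 0 < rho) by (unfold rho; repeat apply Rmin_glb_lt; auto).
  assert (Hr1' : rho <= r1) by (unfold rho; eapply Rle_trans; [apply Rmin_l| apply Rmin_l]).
  assert (Hrm' : rho <= rm) by (unfold rho; eapply Rle_trans; [apply Rmin_l| apply Rmin_r]).
  assert (Hdl' : rho <= dl) by (unfold rho; apply Rmin_r).
  exists (PS_mult (PS_derive (bx bel 1)) (bx bel (-1))), rho.
  split; [exact Hrho|]. split; [exact Hdl'|].
  intros t Ht.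
  assert (Hp : 0 < 1 + lam * t) by (apply one_plus_pos; auto; fold dl; lra).
  assert (C1 : Rbar_lt (Rabs t) (CV_radius (bx bel 1))) by (apply (radius_of _ _ r1 H1); lra).
  assert (Cm : Rbar_lt (Rabs t) (CV_radius (bx bel (-1)))) by (apply (radius_of _ _ rm Hm); lra).
  assert (C1' : Rbar_lt (Rabs t) (CV_radius (PS_derive (bx bel 1)))) by (rewrite CV_radius_derive; exact C1).
  assert (HD : PSeries (PS_derive (bx bel 1)) t =
     1 * (e_lam lam t / (1 + lam * t)) * exp (1 * (e_lam lam t - 1))).
  { apply (pseries_deriv_eq _ (fun s => exp (1 * (e_lam lam s - 1))) r1); auto; try lra.
    - intros s Hs. apply is_pseries_unique. apply H1. exact Hs.
    - apply G_deriv; auto. }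
  pose proof (is_pseries_mult _ _ t _ _ (pseries_at _ t C1') (Hm t ltac:(lra)) C1' Cm) as HM.
  rewrite HD in HM.
  replace (e_lam lam t / (1 + lam * t)) with
    (1 * (e_lam lam t / (1 + lam * t)) * exp (1 * (e_lam lam t - 1)) * exp (-1 * (e_lam lam t - 1))).
  exact HM.
  rewrite Rmult_assoc, <- exp_plus.
  replace (1 * (e_lam lam t - 1) + -1 * (e_lam lam t - 1)) with 0 by ring.
  rewrite exp_0. ring.
Qed.

Lemma abs_in_interval t x : Rmin 0 t <= x <= Rmax 0 t -> Rabs x <= Rabs t.
Proof.
  intros [H1 H2]. apply Rabs_le.
  unfold Rmin, Rmax in *. destruct (Rle_dec 0 t).
  - rewrite Rabs_pos_eq by lra. lra.
  - rewrite Rabs_left by lra. lra.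
Qed.

Lemma step_alpha lam (Hlam : lam <> 0) g rho (Hrho : 0 < rho) (Hdl : rho <= / (2 * Rabs lam))
  (Hg : forall t, Rabs t < rho -> is_pseries g t (e_lam lam t / (1 + lam * t))) :
  forall t, Rabs t < rho -> is_pseries (mkalpha g) t (e_lam lam t - 1).
Proof.
  assert (Cg : forall t, Rabs t < rho -> Rbar_lt (Rabs t) (CV_radius g)) by (apply (radius_of _ _ rho Hg)).
  assert (Ea : forall n, PS_derive (mkalpha g) n = g n).
  { intros n. unfold PS_derive, mkalpha. field. apply not_0_INR. lia. }
  assert (CVe : CV_radius (mkalpha g) = CV_radius g).
  { rewrite <- CV_radius_derive. apply CV_radius_ext. exact Ea. }
  assert (Ca : forall t, Rabs t < rho -> Rbar_lt (Rabs t) (CV_radius (mkalpha g))) by (intros; rewrite CVe; auto).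
  set (h := fun s => PSeries (mkalpha g) s - (e_lam lam s - 1)).
  assert (Hh : forall s, Rabs s < rho -> is_derive h s 0).
  { intros s Hs.
    assert (Hp : 0 < 1 + lam * s) by (apply one_plus_pos; auto; lra).
    pose proof (is_derive_PSeries _ s (Ca s Hs)) as D1.
    rewrite (PSeries_ext _ _ s Ea) in D1.
    rewrite (is_pseries_unique _ _ _ (Hg s Hs)) in D1.
    pose proof (is_derive_minus _ _ s _ _ D1 (A_deriv lam s Hlam Hp)) as D.
    match type of D with is_derive _ _ ?v => replace v with 0 in D by (unfold minus, plus, opp; simpl; ring) end.
    exact D. }
  assert (Hval : forall t, Rabs t < rho -> PSeries (mkalpha g) t = e_lam lam t - 1).
  { intros t Ht.
    destruct (MVT_gen h 0 t (fun _ => 0)) as [c [Hc E]].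
    - intros x Hx. apply Hh. pose proof (abs_in_interval t x ltac:(lra)). lra.
    - intros x Hx. apply (cont_of_derive h x 0). apply Hh. pose proof (abs_in_interval t x Hx). lra.
    - unfold h in E. rewrite PSeries_0, e_0 in E. simpl (mkalpha g 0) in E. lra. }
  intros t Ht. rewrite <- Hval by exact Ht. apply pseries_at. auto.
Qed.

Lemma step_upow lam g rho
  (Ha : forall t, Rabs t < rho -> is_pseries (mkalpha g) t (e_lam lam t - 1)) :
  forall k t, Rabs t < rho -> is_pseries (upow (mkalpha g) k) t ((e_lam lam t - 1) ^ k).
Proof.
  induction k as [|k IH]; intros t Ht.
  - simpl. apply pseries_delta0.
  - simpl upow. 
    exact (is_pseries_mult _ _ t _ _ (Ha t Ht) (IH t Ht) (radius_of _ _ rho Ha t Ht)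
             (radius_of _ _ rho (IH) t Ht)).
Qed.

Lemma step_Hder lam (Hlam : lam <> 0) g rho (Hrho : 0 < rho) (Hdl : rho <= / (2 * Rabs lam))
  (Hg : forall t, Rabs t < rho -> is_pseries g t (e_lam lam t / (1 + lam * t))) :
  forall k n, INR (S n) * upow (mkalpha g) (S k) (S n) =
              INR (S k) * PS_mult g (upow (mkalpha g) k) n.
Proof.
  intros k.
  pose proof (step_alpha lam Hlam g rho Hrho Hdl Hg) as Ha.
  pose proof (step_upow lam g rho Ha) as Hu.
  set (u := upow (mkalpha g)) in *.
  assert (H := pseries_uniq' (PS_derive (u (S k))) (PS_scal (INR (S k)) (PS_mult g (u k)))
     (fun t => PSeries (PS_derive (u (S k))) t)
     (fun t => scal (INR (S k)) (e_lam lam t / (1 + lam * t) * (e_lam lam t - 1) ^ k)) rho Hrho).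
  assert (CuS : forall t, Rabs t < rho -> Rbar_lt (Rabs t) (CV_radius (u (S k)))).
  { apply (radius_of _ (fun t => (e_lam lam t - 1) ^ (S k)) rho (Hu (S k))). }
  intros n. refine (H _ _ _ n).
  - intros t Ht. apply pseries_at. rewrite CV_radius_derive. auto.
  - intros t Ht. apply (is_pseries_scal (K := R_AbsRing) (V := R_NormedModule)).
    { unfold mult; simpl. apply Rmult_comm. }
    apply is_pseries_mult; auto.
    + apply (radius_of _ _ rho Hg); auto.
    + apply (radius_of _ (fun t => (e_lam lam t - 1) ^ k) rho (Hu k)); auto.
  - intros t Ht.
    assert (Hp : 0 < 1 + lam * t) by (apply one_plus_pos; auto; lra).
    assert (HD : PSeries (PS_derive (u (S k))) t =
      INR (S k) * (e_lam lam t / (1 + lam * t)) * (e_lam lam t - 1) ^ (Nat.pred (S k))).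
    { apply (pseries_deriv_eq _ (fun s => (e_lam lam s - 1) ^ (S k)) rho); auto.
      - intros s Hs. apply is_pseries_unique. apply Hu. exact Hs.
      - apply (is_derive_pow (fun s => e_lam lam s - 1)). apply A_deriv; auto. }
    cbv beta. rewrite HD. unfold scal; simpl; unfold mult; simpl. ring.
Qed.

Lemma step_bell lam (Hlam : lam <> 0) bel (Hbel : is_degenerate_bell lam bel)
  g rho (Hrho : 0 < rho) (Hdl : rho <= / (2 * Rabs lam))
  (Hg : forall t, Rabs t < rho -> is_pseries g t (e_lam lam t / (1 + lam * t))) :
  forall x n, bel n x / INR (fact n) = Pol g x n.
Proof.
  intros x.
  destruct (Hbel x) as [rx [Hrx Hx]].
  set (b := fun n => bel n x / INR (fact n)) in *.
  set (r := Rmin rx rho).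
  assert (Hr : 0 < r) by (unfold r; apply Rmin_glb_lt; auto).
  assert (Hr1 : r <= rx) by apply Rmin_l.
  assert (Hr2 : r <= rho) by apply Rmin_r.
  assert (Cb : forall t, Rabs t < rx -> Rbar_lt (Rabs t) (CV_radius b)).
  { apply (radius_of b (fun t => exp (x * (e_lam lam t - 1))) rx Hx). }
  assert (Cg : forall t, Rabs t < rho -> Rbar_lt (Rabs t) (CV_radius g)).
  { apply (radius_of g (fun t => e_lam lam t / (1 + lam * t)) rho Hg). }
  assert (Hrec : forall n, PS_derive b n = PS_scal x (PS_mult g b) n).
  { apply (pseries_uniq' _ _ (fun t => PSeries (PS_derive b) t)
      (fun t => scal x (e_lam lam t / (1 + lam * t) * exp (x * (e_lam lam t - 1)))) r Hr).
    - intros t Ht. apply pseries_at. rewrite CV_radius_derive. apply Cb. lra.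
    - intros t Ht. apply (is_pseries_scal (K := R_AbsRing) (V := R_NormedModule)).
      { unfold mult; simpl. apply Rmult_comm. }
      apply is_pseries_mult; [apply Hg; lra | apply Hx; lra | apply Cg; lra | apply Cb; lra].
    - intros t Ht.
      assert (Hp : 0 < 1 + lam * t) by (apply one_plus_pos; auto; lra).
      assert (HD : PSeries (PS_derive b) t =
        x * (e_lam lam t / (1 + lam * t)) * exp (x * (e_lam lam t - 1))).
      { apply (pseries_deriv_eq _ (fun s => exp (x * (e_lam lam s - 1))) rx); auto; try lra.
        - intros s Hs. apply is_pseries_unique. apply Hx. exact Hs.
        - apply Cb; lra.
        - apply G_deriv; auto. }
      cbv beta. rewrite HD. unfold scal; simpl; unfold mult; simpl. ring. }
  assert (Hb0 : b 0%nat = 1).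
  { assert (H0 := Hx 0 ltac:(rewrite Rabs_R0; lra)).
    apply is_pseries_unique in H0. rewrite PSeries_0, e_0 in H0.
    rewrite H0. replace (x * (1 - 1)) with 0 by ring. apply exp_0. }
  assert (Hder := step_Hder lam Hlam g rho Hrho Hdl Hg).
  intros n. change (b n = Pol g x n).
  induction n as [n IH] using (well_founded_induction lt_wf).
  destruct n as [|n].
  - rewrite Hb0. unfold Pol. simpl. field.
  - pose proof (Hrec n) as Hn. unfold PS_derive, PS_scal in Hn.
    pose proof (Pol_rec g x n Hder) as HP.
    assert (E : PS_mult g b n = PS_mult g (Pol g x) n).
    { unfold PS_mult. apply sum_eq. intros i Hi. rewrite IH by lia. reflexivity. }
    assert (INR (S n) <> 0) by (apply not_0_INR; lia).
    apply Rmult_eq_reg_l with (INR (S n)); auto.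
    rewrite HP, <- E. exact Hn.
Qed.

Lemma step_beta lam (Hlam : lam <> 0) g rho (Hrho : 0 < rho) (Hdl : rho <= / (2 * Rabs lam))
  (Hg : forall t, Rabs t < rho -> is_pseries g t (e_lam lam t / (1 + lam * t)))
  beta1 beta2 (Hb1 : is_degenerate_bernoulli lam beta1)
  (Hb2 : is_degenerate_bernoulli (lam / 2) beta2) :
  forall n, beta1 n / INR (fact n) - 2 ^ n * (beta2 n / INR (fact n)) = shift (cseq g) n.
Proof.
  destruct Hb1 as [r1 [Hr1 H1]]. destruct Hb2 as [r2 [Hr2 H2]].
  set (d := fun n => beta1 n / INR (fact n) - 2 ^ n * (beta2 n / INR (fact n))).
  set (r := Rmin rho (Rmin r1 (r2 / 2))).
  assert (Hr : 0 < r) by (unfold r; repeat apply Rmin_glb_lt; lra).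
  assert (Hra : r <= rho) by apply Rmin_l.
  assert (Hrb : r <= r1) by (unfold r; eapply Rle_trans; [apply Rmin_r|apply Rmin_l]).
  assert (Hrc : r <= r2 / 2) by (unfold r; eapply Rle_trans; [apply Rmin_r|apply Rmin_r]).
  assert (Hd : forall t, 0 < Rabs t < r -> is_pseries d t (t / (e_lam lam t + 1))).
  { intros t Ht.
    assert (Hp : 0 < 1 + lam * t) by (apply one_plus_pos; auto; lra).
    assert (Ht0 : t <> 0) by (intro E; rewrite E, Rabs_R0 in Ht; lra).
    assert (He1 : e_lam lam t <> 1) by (apply e_ne1; auto).
    assert (He0 := e_pos lam t).
    pose proof (H1 t ltac:(lra)) as P1.
    assert (A2 : 0 < Rabs (2 * t) < r2) by (rewrite Rabs_mult, Rabs_pos_eq by lra; lra).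
    pose proof (H2 (2 * t) A2) as P2.
    assert (P2' : is_pseries (fun n => 2 ^ n * (beta2 n / INR (fact n))) t
                   (2 * t / (e_lam (lam / 2) (2 * t) - 1))).
    { unfold is_pseries in *. eapply is_series_ext; [|exact P2].
      intros n. rewrite !pow_n_pow. unfold scal; simpl; unfold mult; simpl.
      rewrite Rpow_mult_distr. ring. }
    pose proof (is_pseries_minus _ _ t _ _ P1 P2') as P.
    rewrite e_sq in P by exact Hlam.
    eapply is_pseries_ext; [|match type of P with is_pseries _ _ ?v =>
       replace v with (t / (e_lam lam t + 1)) in P end; [exact P|]].
    - intros n. reflexivity.
    - unfold plus, opp; simpl.
      assert (e_lam lam t - 1 <> 0) by (intro E; apply He1; lra).
      assert (e_lam lam t * e_lam lam t - 1 <> 0).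
      { replace (e_lam lam t * e_lam lam t - 1) with ((e_lam lam t - 1) * (e_lam lam t + 1)) by ring.
        apply Rmult_integral_contrapositive_currified; lra. }
      field. repeat split; lra. }
  assert (Ha := step_alpha lam Hlam g rho Hrho Hdl Hg).
  assert (Ha2 : forall t, Rabs t < rho -> is_pseries (alpha2 g) t (e_lam lam t + 1)).
  { intros t Ht.
    pose proof (is_pseries_scal (K := R_AbsRing) (V := R_NormedModule) 2 delta0 t 1
      ltac:(unfold mult; simpl; apply Rmult_comm) (pseries_delta0 t)) as P0.
    pose proof (is_pseries_plus _ _ t _ _ (Ha t Ht) P0) as P.
    eapply is_pseries_ext; [|match type of P with is_pseries _ _ ?v =>
       replace v with (e_lam lam t + 1) in P end; [exact P|]].
    - intros n. reflexivity.
    - unfold plus, scal; simpl; unfold mult; simpl. ring. }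
  assert (HM : forall n, PS_mult (alpha2 g) d n = delta1 n).
  { apply (pseries_uniq0 _ _ (fun t => t) r Hr).
    - intros t Ht.
      pose proof (is_pseries_mult _ _ t _ _ (Ha2 t ltac:(lra)) (Hd t Ht)
        (radius_of _ (fun t => e_lam lam t + 1) rho Ha2 t ltac:(lra))
        (radius_of0 _ (fun t => t / (e_lam lam t + 1)) r Hd t ltac:(lra))) as P.
      assert (He0 := e_pos lam t).
      replace ((e_lam lam t + 1) * (t / (e_lam lam t + 1))) with t in P by (field; lra).
      exact P.
    - intros t _. apply pseries_delta1. }
  assert (HC : forall n, PS_mult (alpha2 g) (shift (cseq g)) n = delta1 n).
  { intros [|n].
    - apply PS_mult_shift0.
    - rewrite PS_mult_shiftS, cseq_rec. destruct n; reflexivity. }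
  apply (PS_mult_cancel (alpha2 g)).
  - unfold alpha2. simpl. lra.
  - intros n. rewrite HM, HC. reflexivity.
Qed.

Theorem theorem12 (lam : R) (Hlam : lam <> 0)
  (bel : nat -> R -> R) (beta1 beta2 : nat -> R)
  (Hbel : is_degenerate_bell lam bel)
  (Hb1 : is_degenerate_bernoulli lam beta1)
  (Hb2 : is_degenerate_bernoulli (lam / 2) beta2)
  (n : nat) :
  is_RInt_gen (fun x => exp (-2 * x) * bel n (- x))
    (at_point 0) (Rbar_locally p_infty)
    ((beta1 (S n) - 2 ^ (S n) * beta2 (S n)) / INR (S n)).
Proof.
  destruct (step_gamma lam Hlam bel Hbel) as [g [rho [Hrho [Hdl Hg]]]].
  pose proof (step_bell lam Hlam bel Hbel g rho Hrho Hdl Hg) as Hb.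
  pose proof (step_beta lam Hlam g rho Hrho Hdl Hg beta1 beta2 Hb1 Hb2 (S n)) as Hd.
  simpl shift in Hd.
  set (u := upow (mkalpha g)) in *.
  assert (Hu : forall k m, (m < k)%nat -> u k m = 0).
  { intros k m Hk. apply upow_zero; [reflexivity|exact Hk]. }
  set (w := fun k => INR (fact n) * (-1) ^ k / INR (fact k) * u k n).
  pose proof (poly_int w n) as P.
  assert (HF : INR (fact n) <> 0) by apply INR_fact_neq_0.
  assert (HS : INR (S n) <> 0) by (apply not_0_INR; lia).
  replace ((beta1 (S n) - 2 ^ (S n) * beta2 (S n)) / INR (S n))
    with (sum_f_R0 (fun k => w k * (INR (fact k) / 2 ^ (S k))) n).
  - eapply is_RInt_gen_ext; [|exact P].
    apply filter_forall. intros ab x _.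
    assert (Bx : bel n (- x) = INR (fact n) * Pol g (- x) n).
    { rewrite <- (Hb (- x) n). field. exact HF. }
    rewrite Bx. unfold Pol. fold u. rewrite <- !sum_mult_l.
    apply sum_eq. intros k Hk. unfold w.
    replace ((- x) ^ k) with ((-1) ^ k * x ^ k) by (rewrite <- Rpow_mult_distr; f_equal; ring).
    field. apply INR_fact_neq_0.
  - unfold cseq in Hd. fold u in Hd. rewrite tech5 in Hd.
    rewrite (Hu (S n) n) in Hd by lia.
    rewrite INR_fact_S in Hd.
    transitivity (INR (fact n) * sum_f_R0 (fun k => (-1) ^ k * u k n / 2 ^ S k) n).
    + rewrite <- sum_mult_l. apply sum_eq. intros k Hk. unfold w. field. split.
      apply pow_nonzero; lra. apply INR_fact_neq_0.
    + replace (sum_f_R0 (fun k => (-1) ^ k * u k n / 2 ^ S k) n)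
        with (beta1 (S n) / (INR (S n) * INR (fact n)) -
              2 ^ S n * (beta2 (S n) / (INR (S n) * INR (fact n)))) by lra.
      field. split; auto.
Qed.
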